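(* If $M$ is a monoidal category which admits functorial inverses, then the underlying category of $M$ is a groupoid.
   Context: A monoidal category $M$ admits functorial inverses if there exist a functor $i:M\to M$ and a natural isomorphism $x\otimes i(x)\cong 1$. *)

(* Defs.v *)
Set Implicit Arguments.
Unset Strict Implicit.

Record Category := {
  Obj :> Type;
  Hom : Obj -> Obj -> Type;
  idm : forall a, Hom a a;
  comp : forall a b c, Hom b c -> Hom a b -> Hom a c;
  comp_id_l : forall a b (f : Hom a b), comp (idm b) f = f;
  comp_id_r : forall a b (f : Hom a b), comp f (idm a) = f;
  comp_assoc : forall a b c d (f : Hom c d) (g : Hom b c) (h : Hom a b),
      comp f (comp g h) = comp (comp f g) h
}.

Arguments Hom {C} a b : rename.
Arguments idm {C} a : rename.
Arguments comp {C a b c} f g : rename.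

Definition is_iso (C : Category) (a b : C) (f : Hom a b) : Prop :=
  exists g : Hom b a, comp g f = idm a /\ comp f g = idm b.

Definition is_groupoid (C : Category) : Prop :=
  forall (a b : C) (f : Hom a b), is_iso f.

Record Functor (C D : Category) := {
  fobj :> C -> D;
  fmap : forall a b : C, Hom a b -> Hom (fobj a) (fobj b);
  fmap_id : forall a : C, fmap (idm a) = idm (fobj a);
  fmap_comp : forall (a b c : C) (f : Hom b c) (g : Hom a b),
      fmap (comp f g) = comp (fmap f) (fmap g)
}.

Arguments fmap {C D} F {a b} f : rename.

Record MonoidalCategory := {
  mcat :> Category;
  tens : mcat -> mcat -> mcat;
  tensm : forall (a b c d : mcat), Hom a c -> Hom b d -> Hom (tens a b) (tens c d);
  tensm_id : forall a b : mcat, tensm (idm a) (idm b) = idm (tens a b);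
  tensm_comp : forall (a1 a2 a3 b1 b2 b3 : mcat)
      (f : Hom a2 a3) (f' : Hom a1 a2) (g : Hom b2 b3) (g' : Hom b1 b2),
      tensm (comp f f') (comp g g') = comp (tensm f g) (tensm f' g');
  munit : mcat;
  assoc : forall a b c : mcat, Hom (tens (tens a b) c) (tens a (tens b c));
  assoc_iso : forall a b c : mcat, is_iso (assoc a b c);
  assoc_nat : forall (a a' b b' c c' : mcat)
      (f : Hom a a') (g : Hom b b') (h : Hom c c'),
      comp (assoc a' b' c') (tensm (tensm f g) h)
      = comp (tensm f (tensm g h)) (assoc a b c);
  lunit : forall a : mcat, Hom (tens munit a) a;
  lunit_iso : forall a : mcat, is_iso (lunit a);
  lunit_nat : forall (a a' : mcat) (f : Hom a a'),
      comp (lunit a') (tensm (idm munit) f) = comp f (lunit a);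
  runit : forall a : mcat, Hom (tens a munit) a;
  runit_iso : forall a : mcat, is_iso (runit a);
  runit_nat : forall (a a' : mcat) (f : Hom a a'),
      comp (runit a') (tensm f (idm munit)) = comp f (runit a);
  pentagon : forall a b c d : mcat,
      comp (assoc a b (tens c d)) (assoc (tens a b) c d)
      = comp (tensm (idm a) (assoc b c d))
             (comp (assoc a (tens b c) d) (tensm (assoc a b c) (idm d)));
  triangle : forall a b : mcat,
      comp (tensm (idm a) (lunit b)) (assoc a munit b)
      = tensm (runit a) (idm b)
}.

Arguments tensm {M a b c d} f g : rename.
Arguments munit m : clear implicits.

(* M admits functorial inverses: there is a functor i : M -> M and a natural
   isomorphism eps : x (x) i(x) ~= 1, i.e. a family of isomorphisms
   eps_x : x (x) i(x) -> 1, natural in x (the target being the constant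
   functor at the unit object). *)
Definition admits_functorial_inverses (M : MonoidalCategory) : Prop :=
  exists (i : Functor M M) (eps : forall x : M, Hom (tens x (i x)) (munit M)),
    (forall x : M, is_iso (eps x)) /\
    (forall (x y : M) (f : Hom x y),
        comp (eps y) (tensm f (fmap i f)) = comp (idm (munit M)) (eps x)).

(* Main.v *)
Require Import Defs.

Lemma iso_comp (C : Category) (a b c : C) (f : Hom b c) (g : Hom a b) :
  is_iso f -> is_iso g -> is_iso (comp f g).
Proof.
  intros [f' [Hf1 Hf2]] [g' [Hg1 Hg2]]. exists (comp g' f'). split.
  - rewrite comp_assoc, <- (comp_assoc g'), Hf1, comp_id_r. exact Hg1.
  - rewrite comp_assoc, <- (comp_assoc f), Hg2, comp_id_r. exact Hf2.
Qed.

Lemma left_inv_transfer (C : Category) (x y tx ty : C) (f : Hom x y) (tf : Hom tx ty)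
  (px : Hom tx x) (py : Hom ty y) :
  is_iso px -> is_iso py -> comp py tf = comp f px ->
  (exists r, comp r tf = idm tx) -> exists l, comp l f = idm x.
Proof.
  intros [px' [Hx1 Hx2]] [py' [Hy1 Hy2]] Hn [r Hr].
  exists (comp px (comp r py')).
  assert (E : comp py' f = comp tf px').
  { transitivity (comp (comp py' f) (comp px px')).
    { rewrite Hx2, comp_id_r. reflexivity. }
    rewrite comp_assoc, <- (comp_assoc py' f px), <- Hn, comp_assoc, Hy1, comp_id_l.
    reflexivity. }
  rewrite <- comp_assoc, <- comp_assoc, E, (comp_assoc r tf), Hr, comp_id_l. exact Hx2.
Qed.

Lemma right_inv_transfer (C : Category) (x y tx ty : C) (f : Hom x y) (tf : Hom tx ty)
  (px : Hom tx x) (py : Hom ty y) :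
  is_iso px -> is_iso py -> comp py tf = comp f px ->
  (exists s, comp tf s = idm ty) -> exists s, comp f s = idm y.
Proof.
  intros [px' [Hx1 Hx2]] [py' [Hy1 Hy2]] Hn [s Hs].
  exists (comp px (comp s py')).
  rewrite comp_assoc, <- Hn, <- comp_assoc, (comp_assoc tf s), Hs, comp_id_l. exact Hy2.
Qed.

Lemma tensm_iso (M : MonoidalCategory) (a b c d : M) (f : Hom a c) (g : Hom b d) :
  is_iso f -> is_iso g -> is_iso (tensm f g).
Proof.
  intros [f' [Hf1 Hf2]] [g' [Hg1 Hg2]]. exists (tensm f' g'). split.
  - rewrite <- tensm_comp, Hf1, Hg1. apply tensm_id.
  - rewrite <- tensm_comp, Hf2, Hg2. apply tensm_id.
Qed.

Section Phi.
Variables (M : MonoidalCategory) (z w : M) (e : Hom (tens z w) (munit M)).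
Hypothesis He : is_iso e.

Definition phi (a : M) : Hom (tens (tens a z) w) a :=
  comp (runit a) (comp (tensm (idm a) e) (assoc a z w)).

Lemma phi_iso a : is_iso (phi a).
Proof.
  unfold phi. apply iso_comp; [apply runit_iso|]. apply iso_comp; [|apply assoc_iso].
  apply tensm_iso; auto. exists (idm a); split; apply comp_id_l.
Qed.

Lemma phi_nat (a b : M) (g : Hom a b) :
  comp (phi b) (tensm (tensm g (idm z)) (idm w)) = comp g (phi a).
Proof.
  unfold phi. rewrite <- !comp_assoc, assoc_nat, tensm_id.
  rewrite (comp_assoc (tensm (idm b) e)), <- tensm_comp, comp_id_l, comp_id_r.
  replace (tensm g e) with (comp (tensm g (idm (munit M))) (tensm (idm a) e)).
  - rewrite !comp_assoc, runit_nat. reflexivity.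
  - rewrite <- tensm_comp, comp_id_l, comp_id_r. reflexivity.
Qed.
End Phi.

Theorem lemma3p13 (M : MonoidalCategory) :
  admits_functorial_inverses M -> is_groupoid M.
Proof.
  intros [i [eps [Hiso Hnat]]] x y f.
  assert (Hff : is_iso (tensm f (fmap i f))).
  { destruct (Hiso x) as [ex [Hx1 Hx2]]. destruct (Hiso y) as [ey [Hy1 Hy2]].
    pose proof (Hnat x y f) as N. rewrite comp_id_l in N.
    assert (E : tensm f (fmap i f) = comp ey (eps x)).
    { rewrite <- N, comp_assoc, Hy1, comp_id_l. reflexivity. }
    rewrite E. exists (comp ex (eps y)). split.
    - rewrite comp_assoc, <- (comp_assoc ex), Hy2, comp_id_r. exact Hx1.
    - rewrite comp_assoc, <- (comp_assoc ey), Hx2, comp_id_r. exact Hy1. }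
  destruct Hff as [h [Hh1 Hh2]].
  assert (D1 : tensm f (fmap i f) = comp (tensm (idm y) (fmap i f)) (tensm f (idm (i x)))).
  { rewrite <- tensm_comp, comp_id_l, comp_id_r. reflexivity. }
  assert (D2 : tensm f (fmap i f) = comp (tensm f (idm (i y))) (tensm (idm x) (fmap i f))).
  { rewrite <- tensm_comp, comp_id_l, comp_id_r. reflexivity. }
  assert (L : exists l, comp l f = idm x).
  { apply (@left_inv_transfer M x y _ _ f (tensm (tensm f (idm (i x))) (idm (i (i x))))
             (@phi M _ _ (eps (i x)) x) (@phi M _ _ (eps (i x)) y)).
    - apply phi_iso; apply Hiso.
    - apply phi_iso; apply Hiso.
    - apply phi_nat.
    - exists (tensm (comp h (tensm (idm y) (fmap i f))) (idm (i (i x)))).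
      rewrite <- tensm_comp, <- comp_assoc, <- D1, Hh1, comp_id_l. apply tensm_id. }
  assert (R : exists s, comp f s = idm y).
  { apply (@right_inv_transfer M x y _ _ f (tensm (tensm f (idm (i y))) (idm (i (i y))))
             (@phi M _ _ (eps (i y)) x) (@phi M _ _ (eps (i y)) y)).
    - apply phi_iso; apply Hiso.
    - apply phi_iso; apply Hiso.
    - apply phi_nat.
    - exists (tensm (comp (tensm (idm x) (fmap i f)) h) (idm (i (i y)))).
      rewrite <- tensm_comp, comp_assoc, <- D2, Hh2, comp_id_l. apply tensm_id. }
  destruct L as [l Hl]. destruct R as [s Hs].
  exists l. split; [exact Hl|].
  assert (E : l = s).
  { rewrite <- (comp_id_r l), <- Hs, comp_assoc, Hl, comp_id_l. reflexivity. }
  rewrite E. rewrite E in Hl. exact Hs.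
Qed.
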